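(* Let $(\bm n;\bm m)\in\mathfrak C_{2r}$ and assume that $(\bm n;\bm m)$, every $(\bm n+\bm e_j;\bm m)$ ($1\le j\le r$), and every $(\bm n-\bm e_j;\bm m)$ that lies in $\mathfrak C_{2r}$ are normal. Use the convention $\Phi_{\bm n-\bm e_j;\bm m}:=0$ when $(\bm n-\bm e_j;\bm m)\notin\mathfrak C_{2r}$. Then: (a) for every $k$ with $(\bm n-\bm e_k;\bm m)\in\mathfrak C_{2r}$: $\Phi^*_{\bm n;\bm m}(z)=\Phi^*_{\bm n-\bm e_k;\bm m}(z)+\beta_{\bm n;\bm m}z\Phi_{\bm n-\bm e_k;\bm m}(z)$; (b) for every $k=1,\dots,r$: $\bm\Xi^*_{\bm n;\bm m}(z)=\bm\Xi^*_{\bm n+\bm e_k;\bm m}(z)-\alpha_{\bm n;\bm m}z\bm\Xi_{\bm n+\bm e_k;\bm m}(z)$; (c) there exist complex numbers $\rho_{\bm n;\bm m,1},\dots,\rho_{\bm n;\bm m,r}$ (with $\rho_{\bm n;\bm m,j}=0$ when $(\bm n-\bm e_j;\bm m)\notin\mathfrak C_{2r}$) such that $\Phi_{\bm n;\bm m}(z)=\alpha_{\bm n;\bm m}\Phi^*_{\bm n;\bm m}(z)+\sum_{j=1}^r\rho_{\bm n;\bm m,j}z\Phi_{\bm n-\bm e_j;\bm m}(z)$ and $\bm\Xi_{\bm n;\bm m}(z)=-\beta_{\bm n;\bm m}\bm\Xi^*_{\bm n;\bm m}(z)+\sum_{j=1}^r\rho_{\bm n;\bm m,j}z\bm\Xi_{\bm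 n+\bm e_j;\bm m}(z)$.
   Context: Fix $r\ge1$; $\bm e_j$ is the $j$-th standard unit vector of $\mathbb Z^r$; for $\bm v\in\mathbb Z^r$, $|\bm v|=v_1+\dots+v_r$ (signed). Let $c_{k,j}\in\mathbb C$ ($k\in\mathbb Z$, $1\le j\le r$) and let $L_j$ be the linear functional on complex Laurent polynomials with $L_j[w^{-k}]=c_{k,j}$. $\mathfrak C_{2r}=\{(\bm n;\bm m)\in\mathbb Z^r\times\mathbb Z^r:n_j+m_j\ge0\ \forall j\}$. For $(\bm n;\bm m)\in\mathfrak C_{2r}$, $\bm n\ne-\bm m$, let $T_{\bm n;\bm m}$ be the square matrix of size $|\bm n|+|\bm m|$ with rows indexed by pairs $(j,k)$, $1\le j\le r$, $-m_j\le k\le n_j-1$ (ordered by $j$, then increasing $k$), columns indexed by $i=-|\bm m|,\dots,|\bm n|-1$, entries $c_{k-i,j}$; $T_{\bm n;-\bm n}:=1$. $(\bm n;\bm m)$ is normal if $\det T_{\bm n;\bm m}\ne0$. For normal $(\bm n;\bm m)$, $\bm n\ne-\bm m$: $\Phi_{\bm n;\bm m}$ is the unique Laurent polynomial in $\operatorname{span}\{z^k\}_{k=-|\bm m|}^{|\bm n|}$ with $z^{|\bm n|}$-coefficient $1$ and $L_j[\Phi_{\bm n;\bm m}(w)w^{-k}]=0$ for $-m_j\le k\le n_j-1$, all $j$; $\Phi^*_{\bm n;\bm m}$ is the unique one in that span with $z^{-|\bm m|}$-coefficient $1$ and $L_j[\Phi^*_{\bm n;\bm m}(w)w^{-k}]=0$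 for $-m_j+1\le k\le n_j$, all $j$; $\bm\Xi_{\bm n;\bm m}=(\Xi_{\bm n;\bm m,j})_{j=1}^r$ is the unique vector with $\Xi_{\bm n;\bm m,j}\in\operatorname{span}\{z^k\}_{k=-n_j}^{m_j-1}$, $\sum_jL_j[\Xi_{\bm n;\bm m,j}(w)w^{-k}]=0$ for $-|\bm n|+1\le k\le|\bm m|-1$ and $=1$ for $k=-|\bm n|$; $\bm\Xi^*_{\bm n;\bm m}$ is the unique vector with $\Xi^*_{\bm n;\bm m,j}\in\operatorname{span}\{z^k\}_{k=-n_j+1}^{m_j}$, the same vanishing conditions, and $=1$ for $k=|\bm m|$. For $\bm n=-\bm m$: $\Phi=\Phi^*=1$, $\bm\Xi=\bm\Xi^*=\bm0$. $\alpha_{\bm n;\bm m}$ := $z^{-|\bm m|}$-coefficient of $\Phi_{\bm n;\bm m}$; $\beta_{\bm n;\bm m}$ := $z^{|\bm n|}$-coefficient of $\Phi^*_{\bm n;\bm m}$. *)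

(* Defs.v *)
(* Laurent polynomials over a field F are represented by their
   coefficient functions  int -> F  (p k = coefficient of z^k); membership in
   span{z^k}_{k=lo}^{hi} is the predicate [in_span lo hi p]. *)
From HB Require Import structures.
From mathcomp Require Import all_boot all_order all_algebra.
Set Implicit Arguments. Unset Strict Implicit. Unset Printing Implicit Defensive.
Import Order.TTheory GRing.Theory Num.Theory.
Local Open Scope ring_scope.

Section Defs.
Variables (F : fieldType) (r : nat).

Definition vsum (v : 'I_r -> int) : int := \sum_(j < r) v j.

Definition addej (v : 'I_r -> int) (j : 'I_r) : 'I_r -> int :=
  fun i => v i + (i == j)%:Z.
Definition subej (v : 'I_r -> int) (j : 'I_r) : 'I_r -> int :=
  fun i => v i - (i == j)%:Z.

Definition inC (n m : 'I_r -> int) : bool := [forall j, 0 <= n j + m j].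

Definition antidiag (n m : 'I_r -> int) : bool := [forall j, n j == - m j].

Definition in_span (lo hi : int) (p : int -> F) : Prop :=
  forall k : int, (k < lo) || (hi < k) -> p k = 0.

Definition zmul (p : int -> F) : int -> F := fun k => p (k - 1).

(* For p in span{z^i}_{i=lo}^{hi}:  L_j[p(w) w^{-k}] = sum_{i=lo}^{hi} p_i c_{k-i,j},
   where L_j[w^{-k}] = c k j. *)
Definition Lw (c : int -> 'I_r -> F) (j : 'I_r) (lo hi : int) (p : int -> F)
    (k : int) : F :=
  if lo <= hi then
    \sum_(t < absz (hi - lo + 1)) p (lo + t%:Z) * c (k - (lo + t%:Z)) j
  else 0.

(* Rows of T_{n;m}, indexed by (j,k), j increasing, then k = -m_j..n_j-1
   increasing; each row is given as the function  i |-> c_{k-i,j}. *)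
Definition Trows (c : int -> 'I_r -> F) (n m : 'I_r -> int) : seq (int -> F) :=
  flatten [seq [seq (fun i : int => c (k - i) j)
               | k <- [seq - m j + t%:Z | t <- iota 0 (absz (n j + m j))]]
          | j <- enum 'I_r].

(* T_{n;m}: square of size |n|+|m|, columns i = -|m|, ..., |n|-1.
   (For n = -m it is the empty matrix, whose determinant is 1.) *)
Definition Tmat (c : int -> 'I_r -> F) (n m : 'I_r -> int) :
    'M[F]_(absz (vsum n + vsum m)) :=
  \matrix_(p, q) nth (fun _ => 0) (Trows c n m) p (- vsum m + (q : nat)%:Z).

Definition normal (c : int -> 'I_r -> F) (n m : 'I_r -> int) : bool :=
  \det (Tmat c n m) != 0.

Definition isPhi (c : int -> 'I_r -> F) (n m : 'I_r -> int) (p : int -> F) : Prop :=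
  [/\ in_span (- vsum m) (vsum n) p, p (vsum n) = 1 &
      forall (j : 'I_r) (k : int), - m j <= k <= n j - 1 ->
        Lw c j (- vsum m) (vsum n) p k = 0].

Definition isPhist (c : int -> 'I_r -> F) (n m : 'I_r -> int) (p : int -> F) : Prop :=
  [/\ in_span (- vsum m) (vsum n) p, p (- vsum m) = 1 &
      forall (j : 'I_r) (k : int), - m j + 1 <= k <= n j ->
        Lw c j (- vsum m) (vsum n) p k = 0].

Definition isXi (c : int -> 'I_r -> F) (n m : 'I_r -> int)
    (X : 'I_r -> int -> F) : Prop :=
  if antidiag n m then forall j k, X j k = 0 else
  [/\ forall j, in_span (- n j) (m j - 1) (X j),
      forall k : int, - vsum n + 1 <= k <= vsum m - 1 ->
        \sum_(j < r) Lw c j (- n j) (m j - 1) (X j) k = 0 &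
      \sum_(j < r) Lw c j (- n j) (m j - 1) (X j) (- vsum n) = 1].

Definition isXist (c : int -> 'I_r -> F) (n m : 'I_r -> int)
    (X : 'I_r -> int -> F) : Prop :=
  if antidiag n m then forall j k, X j k = 0 else
  [/\ forall j, in_span (- n j + 1) (m j) (X j),
      forall k : int, - vsum n + 1 <= k <= vsum m - 1 ->
        \sum_(j < r) Lw c j (- n j + 1) (m j) (X j) k = 0 &
      \sum_(j < r) Lw c j (- n j + 1) (m j) (X j) (vsum m) = 1].

End Defs.

(* Main.v *)
Require Import Defs.
From HB Require Import structures.
From mathcomp Require Import all_boot all_order all_algebra.
From mathcomp Require Import zify ring.
Set Implicit Arguments. Unset Strict Implicit. Unset Printing Implicit Defensive.
Import Order.TTheory GRing.Theory Num.Theory.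
Local Open Scope ring_scope.

Definition irange (lo hi : int) : seq int :=
  if lo <= hi then [seq lo + t%:Z | t <- iota 0 (absz (hi - lo + 1)%R)] else [::].

Lemma mem_irange lo hi i : (i \in irange lo hi) = (lo <= i <= hi).
Proof.
rewrite /irange; case: ifP => h.
  apply/mapP/idP.
    by case=> t; rewrite mem_iota => /andP[_ ht] ->; apply/andP; split; lia.
  move=> /andP[h1 h2]; exists (absz (i - lo)); first by rewrite mem_iota; lia.
  lia.
by rewrite in_nil; apply/esym/negbTE; apply/negP => /andP[h1 h2]; move/negbT: h; lia.
Qed.

Lemma uniq_irange lo hi : uniq (irange lo hi).
Proof.
rewrite /irange; case: ifP => // _.
rewrite map_inj_uniq ?iota_uniq // => s t /= /addrI; lia.
Qed.

Lemma perm_irange (s : seq int) lo hi :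
  uniq s -> (forall i, (i \in s) = (lo <= i <= hi)) -> perm_eq s (irange lo hi).
Proof.
move=> us hs; apply: uniq_perm => //; first exact: uniq_irange.
by move=> i; rewrite hs mem_irange.
Qed.

Section Sums.
Variable F : fieldType.

Lemma isum_win (f : int -> F) lo hi a b :
  (forall i, lo <= i <= hi -> (i < a) || (b < i) -> f i = 0) ->
  lo <= a -> b <= hi ->
  \sum_(i <- irange lo hi) f i = \sum_(i <- irange a b) f i.
Proof.
move=> hf ha hb.
rewrite (bigID (fun i => a <= i <= b)) /=.
rewrite [X in _ + X]big1_seq ?addr0; last first.
  move=> i /andP[hq]; rewrite mem_irange => hr; apply: hf => //.
  by move: hq; rewrite negb_and -!ltNge.
rewrite -big_filter; apply: perm_big; apply: perm_irange.
  by rewrite filter_uniq // uniq_irange.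
move=> i; rewrite mem_filter mem_irange.
apply/idP/idP; [by case/andP | move=> /andP[h1 h2]; rewrite h1 h2 /=; apply/andP; split; lia].
Qed.

Lemma isum1 (f : int -> F) a : \sum_(i <- irange a a) f i = f a.
Proof.
rewrite /irange lexx subrr add0r /= big_cons big_nil addr0; congr f; lia.
Qed.

Lemma isum_pt (f : int -> F) lo hi x :
  lo <= x <= hi -> (forall i, lo <= i <= hi -> i != x -> f i = 0) ->
  \sum_(i <- irange lo hi) f i = f x.
Proof.
move=> /andP[h1 h2] hf; rewrite (@isum_win f lo hi x x) ?isum1 //.
move=> i hq hh; apply: hf => //; apply/negP => /eqP e; subst i; lia.
Qed.

Lemma isum0 (f : int -> F) lo hi :
  (forall i, lo <= i <= hi -> f i = 0) -> \sum_(i <- irange lo hi) f i = 0.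
Proof. by move=> hf; apply: big1_seq => i /andP[_]; rewrite mem_irange; apply: hf. Qed.

Lemma isum_cons (f : int -> F) lo hi : lo <= hi ->
  \sum_(i <- irange lo hi) f i = f lo + \sum_(i <- irange (lo + 1) hi) f i.
Proof.
move=> h; transitivity (\sum_(i <- lo :: irange (lo + 1) hi) f i); last by rewrite big_cons.
apply: perm_big; rewrite perm_sym; apply: perm_irange.
  by rewrite /= uniq_irange mem_irange andbT; apply/negP => /andP[h1 _]; lia.
move=> i; rewrite in_cons mem_irange; apply/idP/idP.
  by case/orP => [/eqP->|/andP[h1 h2]]; apply/andP; split; lia.
by move=> /andP[h1 h2]; case: (ltP lo i) => hh; [apply/orP; right; apply/andP; split; lia| apply/orP; left; apply/eqP; lia].
Qed.

Lemma isum_shift (f : int -> F) lo hi d :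
  \sum_(i <- irange lo hi) f (i + d) = \sum_(i <- irange (lo + d) (hi + d)) f i.
Proof.
rewrite -(big_map (fun i => i + d) xpredT f); apply: perm_big; apply: perm_irange.
  by rewrite map_inj_uniq ?uniq_irange // => x y /addIr.
move=> i; apply/mapP/idP.
  by case=> x; rewrite mem_irange => /andP[h1 h2] ->; apply/andP; split; lia.
move=> /andP[h1 h2]; exists (i - d); first by rewrite mem_irange; apply/andP; split; lia.
by rewrite subrK.
Qed.

Lemma isum_refl (f : int -> F) lo hi :
  \sum_(i <- irange lo hi) f (- i - 1) = \sum_(i <- irange (- hi - 1) (- lo - 1)) f i.
Proof.
rewrite -(big_map (fun i => - i - 1) xpredT f); apply: perm_big; apply: perm_irange.
  by rewrite map_inj_uniq ?uniq_irange // => x y /addIr /oppr_inj.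
move=> i; apply/mapP/idP.
  by case=> x; rewrite mem_irange => /andP[h1 h2] ->; apply/andP; split; lia.
move=> /andP[h1 h2]; exists (- i - 1); first by rewrite mem_irange; apply/andP; split; lia.
lia.
Qed.

End Sums.

Section A.
Variables (F : fieldType) (r : nat) (c : int -> 'I_r -> F).

Definition A (j : 'I_r) lo hi (p : int -> F) k := \sum_(i <- irange lo hi) p i * c (k - i) j.

Lemma LwE j lo hi p k : Lw c j lo hi p k = A j lo hi p k.
Proof.
rewrite /Lw /A /irange; case: ifP => _; last by rewrite big_nil.
by rewrite big_map -(big_mkord (fun _ => true) (fun t : nat => p (lo + t%:Z) * c (k - (lo + t%:Z)) j)) /index_iota subn0.
Qed.

Lemma A_win j lo hi a b p k : in_span a b p -> lo <= a -> b <= hi ->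
  A j lo hi p k = A j a b p k.
Proof.
move=> hp ha hb; apply: isum_win => // i _ hq; by rewrite hp // mul0r.
Qed.

Lemma A_shift j lo hi p k :
  A j lo hi (fun i => p (i + 1)) k = A j (lo + 1) (hi + 1) p (k + 1).
Proof.
rewrite /A -(isum_shift (fun i => p i * c (k + 1 - i) j)).
by apply: eq_bigr => i _; congr (_ * c _ _); ring.
Qed.

Lemma A_add j lo hi p q k :
  A j lo hi (fun i => p i + q i) k = A j lo hi p k + A j lo hi q k.
Proof. by rewrite /A -big_split; apply: eq_bigr => i _; rewrite mulrDl. Qed.

Lemma A_sub j lo hi p q k :
  A j lo hi (fun i => p i - q i) k = A j lo hi p k - A j lo hi q k.
Proof. by rewrite /A -sumrB; apply: eq_bigr => i _; rewrite mulrBl. Qed.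

Lemma A_scale j lo hi a p k :
  A j lo hi (fun i => a * p i) k = a * A j lo hi p k.
Proof. by rewrite /A mulr_sumr; apply: eq_bigr => i _; rewrite mulrA. Qed.

Lemma A_sum j lo hi (P : 'I_r -> int -> F) k :
  A j lo hi (fun i => \sum_(l < r) P l i) k = \sum_(l < r) A j lo hi (P l) k.
Proof.
rewrite /A exchange_big /=; apply: eq_bigr => i _; by rewrite mulr_suml.
Qed.

Lemma A0 j lo hi p k : (forall i, p i = 0) -> A j lo hi p k = 0.
Proof. by move=> h; apply: big1 => i _; rewrite h mul0r. Qed.

Lemma pairing (p : int -> F) a b (X : 'I_r -> int -> F) (lo hi : 'I_r -> int) :
  \sum_(y <- irange a b) p y * (\sum_(l < r) A l (lo l) (hi l) (X l) (- y)) =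
  \sum_(l < r) \sum_(x <- irange (lo l) (hi l)) X l x * A l a b p (- x).
Proof.
under eq_bigr => y _ do rewrite mulr_sumr.
rewrite exchange_big /=; apply: eq_bigr => l _.
under eq_bigr => y _ do rewrite /A mulr_sumr.
rewrite exchange_big /=; apply: eq_bigr => x _.
rewrite mulr_sumr; apply: eq_bigr => y _.
by rewrite mulrCA; congr (_ * (_ * c _ _)); ring.
Qed.

End A.

Section T.
Variables (F : fieldType) (r : nat) (c : int -> 'I_r -> F).
Implicit Types n m : 'I_r -> int.

Definition kseq (n m : 'I_r -> int) j :=
  [seq - m j + t%:Z | t <- iota 0 (absz (n j + m j))].
Definition pairs (n m : 'I_r -> int) : seq ('I_r * int) :=
  flatten [seq [seq (j, k) | k <- kseq n m j] | j <- enum 'I_r].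

Lemma Trows_pairs n m :
  Trows c n m = map (fun jk => fun i => c (jk.2 - i) jk.1) (pairs n m).
Proof.
rewrite /Trows /pairs map_flatten -map_comp; f_equal; apply: eq_map => j /=.
by rewrite /kseq -!map_comp.
Qed.

Lemma inCP (n m : 'I_r -> int) : reflect (forall j, 0 <= n j + m j) (inC n m).
Proof. exact: forallP. Qed.

Lemma kseq_irange n m j : 0 <= n j + m j -> kseq n m j = irange (- m j) (n j - 1).
Proof.
move=> h; rewrite /kseq /irange; case: ifP => h2.
  congr map; congr iota; lia.
have -> : absz (n j + m j) = 0%N by move/negbT: h2; lia.
by [].
Qed.

Lemma mem_pairs n m j k : inC n m ->
  ((j, k) \in pairs n m) = (- m j <= k <= n j - 1).
Proof.
move=> /inCP hC; apply/flatten_mapP/idP.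
  by case=> j' _ /mapP [k' hk' [-> ->]]; move: hk'; rewrite kseq_irange // mem_irange.
move=> h; exists j; first by rewrite mem_enum.
by apply/mapP; exists k => //; rewrite kseq_irange // mem_irange.
Qed.

Lemma vsum_ge0 n m : inC n m -> 0 <= vsum n + vsum m.
Proof.
move=> /inCP h; rewrite /vsum -big_split /=; exact: sumr_ge0.
Qed.

Lemma size_pairs n m : inC n m -> size (pairs n m) = absz (vsum n + vsum m).
Proof.
move=> hC; have := vsum_ge0 hC; move/inCP: hC => hC hge.
rewrite size_flatten sumnE /shape big_map big_map.
have e : ((\sum_(j <- enum 'I_r) size [seq (j, k) | k <- kseq n m j])%N)%:Z = vsum n + vsum m.
  rewrite (big_morph Posz PoszD (erefl 0%:Z)) /vsum -big_split /= big_enum /=.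
  apply: eq_bigr => j _; rewrite size_map size_map size_iota; have := hC j; lia.
by rewrite -e.
Qed.

Lemma sum_pairs n m (G : 'I_r * int -> F) :
  \sum_(jk <- pairs n m) G jk = \sum_(j < r) \sum_(k <- kseq n m j) G (j, k).
Proof.
rewrite /pairs big_flatten /= big_map big_enum /=; apply: eq_bigr => j _.
by rewrite big_map.
Qed.


Lemma sum_ord_irange (f : int -> F) lo d :
  \sum_(t < d) f (lo + t%:Z) = \sum_(i <- irange lo (lo + d%:Z - 1)) f i.
Proof.
rewrite /irange; case: ifP => h.
  rewrite big_map -(big_mkord (fun _ => true) (fun t : nat => f (lo + t%:Z))) /index_iota subn0.
  by congr (\sum_(t <- iota 0 _) _); lia.
have -> : d = 0%N by move/negbT: h; lia.
by rewrite big_ord0 big_nil.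
Qed.

Lemma U1 n m q : inC n m -> normal c n m ->
  in_span (- vsum m) (vsum n - 1) q ->
  (forall j k, - m j <= k <= n j - 1 -> A c j (- vsum m) (vsum n - 1) q k = 0) ->
  forall i, q i = 0.
Proof.
move=> hC hN hq hA i.
case: (boolP ((i < - vsum m) || (vsum n - 1 < i))) => [/hq //|].
rewrite negb_or -!leNgt => /andP[i1 i2].
set d := absz (vsum n + vsum m).
have hd : (absz (i + vsum m)%R < d)%N by rewrite /d; lia.
have x1 : 'I_r * int.
  have : (0 < size (pairs n m))%N by rewrite size_pairs //; lia.
  by case: (pairs n m) => [//|x _ _]; exact: x.
pose v : 'cV[F]_d := \col_(t < d) q (- vsum m + (t : nat)%:Z).
have Tv : Tmat c n m *m v = 0.
  apply/matrixP => p z; rewrite !mxE.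
  have hp : (p < size (pairs n m))%N by rewrite size_pairs.
  under eq_bigr => t _ do rewrite !mxE Trows_pairs (nth_map x1) //.
  have := mem_nth x1 hp; case: (nth x1 (pairs n m) p) => j k.
  rewrite mem_pairs // => hk /=.
  transitivity (A c j (- vsum m) (vsum n - 1) q k); last exact: hA.
  rewrite /A.
  rewrite (sum_ord_irange (fun i => c (k - i) j * q i)).
  have -> : - vsum m + d%:Z - 1 = vsum n - 1 by rewrite /d; lia.
  by apply: eq_bigr => t _; rewrite mulrC.
have hu : Tmat c n m \in unitmx by rewrite unitmxE unitfE.
have v0 : v = 0 by rewrite -(mulKmx hu v) Tv mulmx0.
have := congr1 (fun M : 'cV[F]_d => M (Ordinal hd) 0) v0; rewrite !mxE /=.
by have -> : - vsum m + (absz (i + vsum m))%:Z = i by lia.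
Qed.


Lemma U2 n m (X : 'I_r -> int -> F) : inC n m -> normal c n m ->
  (forall j, in_span (- n j) (m j - 1) (X j)) ->
  (forall k, - vsum n <= k <= vsum m - 1 ->
     \sum_(j < r) A c j (- n j) (m j - 1) (X j) k = 0) ->
  forall j x, X j x = 0.
Proof.
move=> hC hN hX hA j x.
case: (boolP ((x < - n j) || (m j - 1 < x))) => [/hX //|].
rewrite negb_or -!leNgt => /andP[x1' x2'].
set d := absz (vsum n + vsum m).
set x1 : 'I_r * int := (j, - x - 1).
have hmem : x1 \in pairs n m by rewrite mem_pairs //; apply/andP; split; lia.
have hd : (index x1 (pairs n m) < d)%N by rewrite /d -size_pairs // index_mem.
pose y : 'rV[F]_d := \row_(p < d)
   X (nth x1 (pairs n m) p).1 (- (nth x1 (pairs n m) p).2 - 1).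
have Ty : y *m Tmat c n m = 0.
  apply/matrixP => z t; rewrite !mxE.
  have hz := ltn_ord t.
  under eq_bigr => p _ do rewrite !mxE Trows_pairs (nth_map x1) ?size_pairs //.
  move: (nat_of_ord t) hz => tn hz.
  rewrite -(big_mkord (fun _ => true) (fun p : nat =>
    X (nth x1 (pairs n m) p).1 (- (nth x1 (pairs n m) p).2 - 1) *
    c ((nth x1 (pairs n m) p).2 - (- vsum m + tn%:Z)) (nth x1 (pairs n m) p).1)).
  rewrite /index_iota subn0 /d -size_pairs //.
  have E := @big_nth F 0 +%R _ x1 (pairs n m) (fun _ => true) (fun jk => X jk.1 (- jk.2 - 1) * c (jk.2 - (- vsum m + tn%:Z)) jk.1).
  rewrite /index_iota subn0 in E; rewrite -E.
  rewrite sum_pairs.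
  transitivity (\sum_(j < r) A c j (- n j) (m j - 1) (X j) (vsum m - tn%:Z - 1)); last first.
    have := vsum_ge0 hC; move=> hg; apply: hA; apply/andP; split; lia.
  apply: eq_bigr => l _ /=.
  rewrite kseq_irange; last by move/inCP: hC.
  transitivity (\sum_(k <- irange (- m l) (n l - 1))
     (fun i => X l i * c (vsum m - tn%:Z - 1 - i) l) (- k - 1)).
    by apply: eq_bigr => k _ /=; congr (X l _ * c _ l); ring.
  rewrite (isum_refl (fun i => X l i * c (vsum m - tn%:Z - 1 - i) l) (- m l) (n l - 1)).
  have -> : - (n l - 1) - 1 = - n l by ring.
  by have -> : - - m l - 1 = m l - 1 by ring.
have hu : Tmat c n m \in unitmx by rewrite unitmxE unitfE.
have y0 : y = 0 by rewrite -(mulmxK hu y) Ty mul0mx.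
have := congr1 (fun M : 'rV[F]_d => M 0 (Ordinal hd)) y0; rewrite !mxE /=.
rewrite nth_index //=.
by have -> : - (- x - 1) - 1 = x by ring.
Qed.

End T.

Section H.
Variables (F : fieldType) (r : nat) (c : int -> 'I_r -> F).
Implicit Types n m : 'I_r -> int.

Lemma A_shiftE j lo hi lo' hi' (p : int -> F) d k k' :
  lo + d = lo' -> hi + d = hi' -> k + d = k' ->
  A c j lo hi (fun i => p (i + d)) k = A c j lo' hi' p k'.
Proof.
move=> <- <- <-; rewrite /A -(isum_shift (fun i => p i * c (k + d - i) j)).
by apply: eq_bigr => i _; congr (_ * c _ _); ring.
Qed.

Lemma sub3 (x y z : F) : x - y - z = 0 -> x = y + z.
Proof. move=> h; apply/eqP; rewrite -subr_eq0; apply/eqP; rewrite -[RHS]h; ring. Qed.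

Lemma sum_delta (j : 'I_r) : \sum_(i < r) ((i == j)%:Z) = 1.
Proof.
rewrite (bigD1 j) //= eqxx big1 ?addr0 // => i /negbTE ->; by [].
Qed.

Lemma vsum_sub n j : vsum (subej n j) = vsum n - 1.
Proof. by rewrite /vsum /subej sumrB sum_delta. Qed.

Lemma vsum_add n j : vsum (addej n j) = vsum n + 1.
Proof. by rewrite /vsum /addej big_split /= sum_delta. Qed.

Lemma addej_eq n j : addej n j j = n j + 1.
Proof. by rewrite /addej eqxx. Qed.
Lemma addej_neq n j i : i != j -> addej n j i = n i.
Proof. by rewrite /addej => /negbTE ->; rewrite addr0. Qed.
Lemma subej_eq n j : subej n j j = n j - 1.
Proof. by rewrite /subej eqxx. Qed.
Lemma subej_neq n j i : i != j -> subej n j i = n i.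
Proof. by rewrite /subej => /negbTE ->; rewrite subr0. Qed.

Lemma inC_sub n m j : inC n m -> inC (subej n j) m = (0 < n j + m j).
Proof.
move=> /inCP h; apply/inCP/idP.
  by move=> /(_ j); rewrite subej_eq; lia.
move=> hj i; case: (eqVneq i j) => [->|ne]; first by rewrite subej_eq; lia.
by rewrite subej_neq.
Qed.

Lemma inC_add n m j : inC n m -> inC (addej n j) m.
Proof.
move=> /inCP h; apply/inCP => i; case: (eqVneq i j) => [->|ne].
  by rewrite addej_eq; have := h j; lia.
by rewrite addej_neq.
Qed.

Lemma antidiagE n m : inC n m -> antidiag n m = (vsum n + vsum m == 0).
Proof.
move=> hC; have /inCP h := hC; rewrite /vsum -big_split /=.
apply/forallP/idP.
  move=> ha; apply/eqP; apply: big1 => i _; have := ha i; lia.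
move=> /eqP hs i; have := (psumr_eq0P (P := xpredT) (F := fun i => n i + m i) (fun i _ => h i)) hs i isT.
lia.
Qed.

Lemma antidiag_pt n m j : antidiag n m -> n j + m j = 0.
Proof. by move=> /forallP /(_ j) /eqP ->; rewrite addNr. Qed.

Lemma not_antidiag_add n m j : inC n m -> ~~ antidiag (addej n j) m.
Proof.
move=> hC; apply/negP => /forallP /(_ j) /eqP; rewrite addej_eq.
have /inCP := hC => /(_ j); lia.
Qed.

End H.
Unset Implicit Arguments.

Theorem theorem5p1 (F : fieldType) (r : nat) (c : int -> 'I_r -> F)
    (n m : 'I_r -> int)
    (Phi Phist : int -> F) (Xi Xist : 'I_r -> int -> F)
    (PhiM PhistM : 'I_r -> int -> F)
    (XiP XistP : 'I_r -> 'I_r -> int -> F) :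
  inC n m ->
  normal c n m ->
  (forall j, normal c (addej n j) m) ->
  (forall j, inC (subej n j) m -> normal c (subej n j) m) ->
  isPhi c n m Phi -> isPhist c n m Phist ->
  isXi c n m Xi -> isXist c n m Xist ->
  (forall j, inC (subej n j) m ->
     isPhi c (subej n j) m (PhiM j) /\ isPhist c (subej n j) m (PhistM j)) ->
  (forall j, ~~ inC (subej n j) m -> forall t, PhiM j t = 0) ->
  (forall j, isXi c (addej n j) m (XiP j) /\ isXist c (addej n j) m (XistP j)) ->
  let alpha := Phi (- vsum m) in
  let beta := Phist (vsum n) in
  (* (a) *)
  (forall k, inC (subej n k) m ->
     forall t, Phist t = PhistM k t + beta * zmul (PhiM k) t) /\
  (* (b) *)
  (forall k i t, Xist i t = XistP k i t - alpha * zmul (XiP k i) t) /\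
  (* (c) *)
  (exists rho : 'I_r -> F,
     [/\ forall j, ~~ inC (subej n j) m -> rho j = 0,
         forall t, Phi t = alpha * Phist t + \sum_(j < r) rho j * zmul (PhiM j) t &
         forall i t, Xi i t = - beta * Xist i t
                              + \sum_(j < r) rho j * zmul (XiP j i) t]).
Proof.
move=> hC hN hNa hNs [Phs Ph1 PhA] [Pss Ps1 PsA] HXi HXist HM HM0 HP alpha beta.
subst alpha beta.
have hge := vsum_ge0 hC.
have /inCP hCj := hC.
have {}PhA : forall j k, - m j <= k <= n j - 1 -> A c j (- vsum m) (vsum n) Phi k = 0.
  by move=> j k h; rewrite -LwE; apply: PhA.
have {}PsA : forall j k, - m j + 1 <= k <= n j -> A c j (- vsum m) (vsum n) Phist k = 0.
  by move=> j k h; rewrite -LwE; apply: PsA.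
have HMs : forall j, inC (subej n j) m ->
   [/\ in_span (- vsum m) (vsum n - 1) (PhiM j), PhiM j (vsum n - 1) = 1 &
       forall l k, - m l <= k <= subej n j l - 1 -> A c l (- vsum m) (vsum n - 1) (PhiM j) k = 0].
  move=> j hj; have [[Ms M1 MA] _] := HM j hj.
  rewrite vsum_sub in Ms M1 MA.
  split => // l k h; rewrite -LwE; exact: MA.
have HSs : forall j, inC (subej n j) m ->
   [/\ in_span (- vsum m) (vsum n - 1) (PhistM j), PhistM j (- vsum m) = 1 &
       forall l k, - m l + 1 <= k <= subej n j l -> A c l (- vsum m) (vsum n - 1) (PhistM j) k = 0].
  move=> j hj; have [_ [Ss S1 SA]] := HM j hj.
  rewrite vsum_sub in Ss S1 SA.
  split => // l k h; rewrite -LwE; exact: SA.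
have addej_ge : forall k i, n i <= addej n k i.
  by move=> k i; case: (eqVneq i k) => [->|ne]; [rewrite addej_eq; lia | rewrite addej_neq].
have Xis : forall i, in_span (- n i + 1) (m i) (Xist i).
  move=> i x hx; move: HXist; rewrite /isXist; case: ifP => _; first by move=> H; apply: H.
  by case=> H _ _; apply: H.
have Xs : forall i, in_span (- n i) (m i - 1) (Xi i).
  move=> i x hx; move: HXi; rewrite /isXi; case: ifP => _; first by move=> H; apply: H.
  by case=> H _ _; apply: H.
have Xist0 : antidiag n m -> forall j x, Xist j x = 0.
  by move=> hA; move: HXist; rewrite /isXist hA.
have Xi0 : antidiag n m -> forall j x, Xi j x = 0.
  by move=> hA; move: HXi; rewrite /isXi hA.
have XistA : ~~ antidiag n m ->
   (forall k, - vsum n + 1 <= k <= vsum m - 1 -> \sum_(j < r) A c j (- n j + 1) (m j) (Xist j) k = 0)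
   /\ \sum_(j < r) A c j (- n j + 1) (m j) (Xist j) (vsum m) = 1.
  move=> hA; move: HXist; rewrite /isXist (negbTE hA); case=> _ H1 H2; split.
    by move=> k hk; rewrite -[RHS](H1 k hk); apply: eq_bigr => j _; rewrite LwE.
  by rewrite -[RHS]H2; apply: eq_bigr => j _; rewrite LwE.
have XiA : ~~ antidiag n m ->
   (forall k, - vsum n + 1 <= k <= vsum m - 1 -> \sum_(j < r) A c j (- n j) (m j - 1) (Xi j) k = 0)
   /\ \sum_(j < r) A c j (- n j) (m j - 1) (Xi j) (- vsum n) = 1.
  move=> hA; move: HXi; rewrite /isXi (negbTE hA); case=> _ H1 H2; split.
    by move=> k hk; rewrite -[RHS](H1 k hk); apply: eq_bigr => j _; rewrite LwE.
  by rewrite -[RHS]H2; apply: eq_bigr => j _; rewrite LwE.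
have XPf : forall k,
   [/\ forall i, in_span (- addej n k i) (m i - 1) (XiP k i),
       forall k0, - vsum n <= k0 <= vsum m - 1 ->
         \sum_(i < r) A c i (- addej n k i) (m i - 1) (XiP k i) k0 = 0 &
       \sum_(i < r) A c i (- addej n k i) (m i - 1) (XiP k i) (- vsum n - 1) = 1].
  move=> k; have [H _] := HP k; move: H.
  rewrite /isXi (negbTE (not_antidiag_add k hC)) vsum_add; case=> H0 H1 H2; split => //.
    by move=> k0 hk0; rewrite -[RHS](H1 k0); [apply: eq_bigr => i _; rewrite LwE | lia].
  have -> : - vsum n - 1 = - (vsum n + 1) by ring.
  by rewrite -[RHS]H2; apply: eq_bigr => i _; rewrite LwE.
have XSPf : forall k,
   [/\ forall i, in_span (- addej n k i + 1) (m i) (XistP k i),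
       forall k0, - vsum n <= k0 <= vsum m - 1 ->
         \sum_(i < r) A c i (- addej n k i + 1) (m i) (XistP k i) k0 = 0 &
       \sum_(i < r) A c i (- addej n k i + 1) (m i) (XistP k i) (vsum m) = 1].
  move=> k; have [_ H] := HP k; move: H.
  rewrite /isXist (negbTE (not_antidiag_add k hC)) vsum_add; case=> H0 H1 H2; split => //.
    by move=> k0 hk0; rewrite -[RHS](H1 k0); [apply: eq_bigr => i _; rewrite LwE | lia].
  by rewrite -[RHS]H2; apply: eq_bigr => i _; rewrite LwE.
have hND : ~~ antidiag n m -> 1 <= vsum n + vsum m.
  by move=> hA; move: hA; rewrite antidiagE //; lia.
have B1 : ~~ antidiag n m ->
   \sum_(j < r) A c j (- n j + 1) (m j) (Xist j) (- vsum n) = - Phi (- vsum m).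
  move=> hA; have [H1 H2] := XistA hA; have h1 := hND hA.
  have P := pairing c Phi (- vsum m) (vsum n) Xist (fun i => - n i + 1) (fun i => m i).
  rewrite /= [RHS]big1 in P; last first.
    move=> i _; apply: isum0 => x /andP[x1 x2]; rewrite PhA ?mulr0 //; lia.
  rewrite isum_cons in P; last lia.
  rewrite (isum_pt (x := vsum n)) in P; first last.
  - move=> y /andP[y1 y2] ny; rewrite H1 ?mulr0 //.
    have : y != vsum n := ny; lia.
  - lia.
  rewrite opprK H2 Ph1 mulr1 mul1r in P.
  by apply/eqP; rewrite -addr_eq0 addrC P.
split.
  move=> k hk t.
  have [Ms M1 MA] := HMs k hk.
  have [Ss S1 SA] := HSs k hk.
  have hk' : 0 < n k + m k by rewrite -inC_sub.
  pose q i := Phist (i + 1) - PhistM k (i + 1) - Phist (vsum n) * PhiM k i.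
  have hq : in_span (- vsum m) (vsum (subej n k) - 1) q.
    rewrite vsum_sub => i hi; rewrite /q.
    case/orP: hi => hi.
      rewrite (Ms i) ?hi // mulr0 subr0.
      case: (eqVneq (i + 1) (- vsum m)) => e.
        by rewrite e Ps1 S1 subrr.
      by rewrite Pss ?Ss ?subrr //; apply/orP; left; lia.
    case: (eqVneq (i + 1) (vsum n)) => e.
      have -> : i = vsum n - 1 by rewrite -e; ring.
      rewrite subrK M1 Ss ?subr0 ?mulr1 ?subrr //; apply/orP; right; lia.
    rewrite Pss ?Ss ?Ms ?subrr ?mulr0 ?subr0 //; apply/orP; right; lia.
  have := U1 hk (hNs k hk) hq.
  have HQ : forall j k0, - m j <= k0 <= subej n k j - 1 ->
       A c j (- vsum m) (vsum (subej n k) - 1) q k0 = 0.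
    move=> j k0 hj.
    have hjj : subej n k j <= n j by case: (eqVneq j k) => [->|ne]; [rewrite subej_eq; lia | rewrite subej_neq].
    rewrite -(@A_win _ _ c j (- vsum m - 1) (vsum n - 1) _ _ q k0 hq); first last.
    - by rewrite vsum_sub; lia.
    - lia.
    rewrite /q A_sub A_sub A_scale.
    rewrite (@A_shiftE _ _ c j _ _ (- vsum m) (vsum n) Phist 1 k0 (k0 + 1)); try ring.
    rewrite (@A_shiftE _ _ c j _ _ (- vsum m) (vsum n) (PhistM k) 1 k0 (k0 + 1)); try ring.
    rewrite (@A_win _ _ c j (- vsum m) (vsum n) (- vsum m) (vsum n - 1) (PhistM k)) //; last lia.
    rewrite (@A_win _ _ c j (- vsum m - 1) (vsum n - 1) (- vsum m) (vsum n - 1) (PhiM k)) //; last lia.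
    rewrite PsA; last lia.
    rewrite SA; last lia.
    by rewrite MA // subrr mulr0 subr0.
  move=> /(_ HQ (t - 1)); rewrite /q subrK => h.
  by apply: sub3.
split.
  move=> k i t.
  have [XP0 XP1 XP2] := XPf k.
  have [XS0 XS1 XS2] := XSPf k.
  pose Y i x := XistP k i (x + 1) - Xist i (x + 1) - Phi (- vsum m) * XiP k i x.
  have hY : forall i, in_span (- addej n k i) (m i - 1) (Y i).
    move=> l x hx; rewrite /Y XP0 // mulr0 subr0 XS0 ?Xis ?subrr //; have := addej_ge k l; lia.
  have := U2 (inC_add k hC) (hNa k) hY.
  have HQ : forall k0, - vsum (addej n k) <= k0 <= vsum m - 1 ->
     \sum_(l < r) A c l (- addej n k l) (m l - 1) (Y l) k0 = 0.
    move=> k0; rewrite vsum_add => hk0.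
    rewrite (eq_bigr (fun l => A c l (- addej n k l + 1) (m l) (XistP k l) (k0 + 1)
        - A c l (- n l + 1) (m l) (Xist l) (k0 + 1)
        - Phi (- vsum m) * A c l (- addej n k l) (m l - 1) (XiP k l) k0)); last first.
      move=> l _; rewrite /Y A_sub A_sub A_scale.
      rewrite (@A_shiftE _ _ c l _ _ (- addej n k l + 1) (m l) (XistP k l) 1 k0 (k0 + 1)); try ring.
      rewrite (@A_shiftE _ _ c l _ _ (- addej n k l + 1) (m l) (Xist l) 1 k0 (k0 + 1)); try ring.
      by rewrite (@A_win _ _ c l (- addej n k l + 1) (m l) (- n l + 1) (m l) (Xist l) (k0 + 1) (Xis l)) //; have := addej_ge k l; lia.
    rewrite !sumrB -mulr_sumr.
    case: (boolP (antidiag n m)) => hA.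
      have e : vsum n + vsum m = 0 by move: hA; rewrite antidiagE // => /eqP.
      rewrite [X in _ - X - _]big1 ?subr0; last by move=> l _; apply: A0 => x; apply: (Xist0 hA l x).
      have ek' : k0 + 1 = vsum m by lia.
      have ek : k0 = - vsum n - 1 by lia.
      rewrite ek' XS2 ek XP2 mulr1.
      have -> : - vsum m = vsum n by lia.
      by rewrite Ph1 subrr.
    have [H1 H2] := XistA hA; have B := B1 hA; have h1 := hND hA.
    case: (eqVneq k0 (- vsum n - 1)) => ek.
      rewrite ek XP2 mulr1.
      have -> : - vsum n - 1 + 1 = - vsum n by ring.
      rewrite B XS1; last lia.
      ring.
    rewrite XP1 ?mulr0 ?subr0; last by move: ek; lia.
    case: (eqVneq (k0 + 1) (vsum m)) => ek2.
      by rewrite ek2 XS2 H2 subrr.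
    rewrite XS1 ?H1 ?subrr //; move: ek ek2; lia.
  move=> /(_ HQ i (t - 1)); rewrite /Y subrK => h.
  apply/eqP; rewrite eq_sym -subr_eq0 -h; apply/eqP; rewrite /zmul; ring.
have addej_le : forall k i, addej n k i <= n i + 1.
  by move=> k i; case: (eqVneq i k) => [->|ne]; [rewrite addej_eq | rewrite addej_neq //]; lia.
have PhiM_span : forall j, in_span (- vsum m) (vsum n - 1) (PhiM j).
  move=> j; case: (boolP (inC (subej n j) m)) => hj; first by case: (HMs j hj).
  by move=> x _; apply: HM0.
pose h j := A c j (- vsum m) (vsum n - 1) (PhiM j) (n j - 1).
pose a j := A c j (- vsum m) (vsum n) Phi (n j).
have hnz : forall j, inC (subej n j) m -> h j != 0.
  move=> j hj; apply/eqP => h0.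
  have [Ms M1 MA] := HMs j hj.
  have HQ : forall l k, - m l <= k <= n l - 1 -> A c l (- vsum m) (vsum n - 1) (PhiM j) k = 0.
    move=> l k hk; case: (eqVneq l j) => [el|ne].
      subst l; case: (eqVneq k (n j - 1)) => [->|nk]; first exact: h0.
      by apply: MA; rewrite subej_eq; move: nk; lia.
    by apply: MA; rewrite subej_neq.
  have := U1 hC hN Ms HQ (vsum n - 1); rewrite M1 => /eqP; by rewrite oner_eq0.
pose rho j := if inC (subej n j) m then a j / h j else 0.
have rho_out : forall j, ~~ inC (subej n j) m -> rho j = 0.
  by move=> j /negbTE hj; rewrite /rho hj.
exists rho; split => //.
  move=> t.
  pose q i := Phi (i + 1) - Phi (- vsum m) * Phist (i + 1) - \sum_(j < r) rho j * PhiM j i.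
  have hq : in_span (- vsum m) (vsum n - 1) q.
    move=> i hi; rewrite /q big1 ?subr0; last by move=> j _; rewrite PhiM_span ?mulr0.
    case/orP: hi => hi.
      case: (eqVneq (i + 1) (- vsum m)) => e.
        by rewrite e Ps1 mulr1 subrr.
      by rewrite (Phs (i + 1)) ?(Pss (i + 1)) ?mulr0 ?subrr //; apply/orP; left; lia.
    by rewrite (Phs (i + 1)) ?(Pss (i + 1)) ?mulr0 ?subrr //; apply/orP; right; lia.
  have HQ : forall j0 k0, - m j0 <= k0 <= n j0 - 1 ->
      A c j0 (- vsum m) (vsum n - 1) q k0 = 0.
    move=> j0 k0 hk0.
    rewrite -(@A_win _ _ c j0 (- vsum m - 1) (vsum n - 1) _ _ q k0 hq); [|lia|lia].
    rewrite /q A_sub A_sub A_scale A_sum.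
    rewrite (@A_shiftE _ _ c j0 _ _ (- vsum m) (vsum n) Phi 1 k0 (k0 + 1)); try ring.
    rewrite (@A_shiftE _ _ c j0 _ _ (- vsum m) (vsum n) Phist 1 k0 (k0 + 1)); try ring.
    rewrite PsA ?mulr0 ?subr0; last lia.
    rewrite (eq_bigr (fun j => rho j * A c j0 (- vsum m) (vsum n - 1) (PhiM j) k0)); last first.
      move=> j _; rewrite A_scale.
      by rewrite (@A_win _ _ c j0 (- vsum m - 1) (vsum n - 1) (- vsum m) (vsum n - 1) (PhiM j) k0 (PhiM_span j)) //; lia.
    case: (eqVneq k0 (n j0 - 1)) => ek.
      have hj0 : inC (subej n j0) m by rewrite inC_sub //; lia.
      rewrite (bigD1 j0) //= big1 ?addr0; last first.
        move=> j nj; case: (boolP (inC (subej n j) m)) => hj; last by rewrite rho_out ?mul0r.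
        have [_ _ MA] := HMs j hj.
        by rewrite MA ?mulr0 // subej_neq 1?eq_sym //; lia.
      rewrite /rho hj0 ek -/(h j0).
      have -> : n j0 - 1 + 1 = n j0 by ring.
      by rewrite -/(a j0) divfK ?subrr // hnz.
    rewrite PhA ?sub0r; last by move: ek; lia.
    rewrite big1 ?oppr0 // => j _.
    case: (boolP (inC (subej n j) m)) => hj; last by rewrite rho_out ?mul0r.
    have [_ _ MA] := HMs j hj.
    rewrite MA ?mulr0 //.
    by case: (eqVneq j0 j) => [<-|ne]; [rewrite subej_eq | rewrite subej_neq //]; move: ek; lia.
  have := U1 hC hN hq HQ (t - 1); rewrite /q subrK => E.
  exact: sub3 E.
move=> i t.
case: (boolP (antidiag n m)) => hA.
  rewrite Xi0 // Xist0 // mulr0 add0r big1 // => j _.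
  rewrite rho_out ?mul0r //.
  by rewrite inC_sub // -leNgt (antidiag_pt j hA).
have [XiZ Xi1] := XiA hA; have [XsZ Xs1] := XistA hA; have h1 := hND hA.
have B2 : \sum_(j < r) A c j (- n j) (m j - 1) (Xi j) (vsum m) = - Phist (vsum n).
  have P := pairing c Phist (- vsum m) (vsum n) Xi (fun l => - n l) (fun l => m l - 1).
  rewrite /= [RHS]big1 in P; last first.
    move=> l _; apply: isum0 => x /andP[x1 x2]; rewrite PsA ?mulr0 //; lia.
  rewrite isum_cons in P; last lia.
  rewrite (isum_pt (x := vsum n)) in P; first last.
  - move=> y /andP[y1 y2] ny; rewrite XiZ ?mulr0 //.
    have : y != vsum n := ny; lia.
  - lia.
  rewrite opprK Ps1 mul1r Xi1 mulr1 in P.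
  by apply/eqP; rewrite -addr_eq0 P.
have K : forall l, Xi l (- n l) = rho l * XiP l l (- n l - 1).
  move=> l; rewrite /rho; case: ifP => hl; last first.
    rewrite mul0r; apply: Xs; apply/orP; right; move/negbT: hl; rewrite inC_sub //; lia.
  have hl' : 0 < n l + m l by rewrite -inC_sub.
  have [Ms M1 MA] := HMs l hl.
  have [XP0 XP1 XP2] := XPf l.
  have K1 : Xi l (- n l) * h l = 1.
    have P := pairing c (fun y => PhiM l (y - 1)) (- vsum m + 1) (vsum n) Xi
                (fun j => - n j) (fun j => m j - 1).
    rewrite /= (isum_pt (x := vsum n)) in P; first last.
    - move=> y /andP[y1 y2] ny; rewrite XiZ ?mulr0 //.
      have : y != vsum n := ny; lia.
    - lia.
    rewrite M1 mul1r Xi1 in P.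
    rewrite [RHS]P (bigD1 l) //= [X in _ + X]big1 ?addr0; last first.
      move=> j nj; apply: isum0 => x /andP[x1 x2].
      rewrite (@A_shiftE _ _ c j _ _ (- vsum m) (vsum n - 1) (PhiM l) (-1) (- x) (- x - 1)); try ring.
      by rewrite MA ?mulr0 // subej_neq //; lia.
    rewrite (isum_pt (x := - n l)); first last.
    - move=> x /andP[x1 x2] nx.
      rewrite (@A_shiftE _ _ c l _ _ (- vsum m) (vsum n - 1) (PhiM l) (-1) (- x) (- x - 1)); try ring.
      rewrite MA ?mulr0 // subej_eq; have : x != - n l := nx; lia.
    - lia.
    rewrite (@A_shiftE _ _ c l _ _ (- vsum m) (vsum n - 1) (PhiM l) (-1) (- - n l) (n l - 1)) //; ring.
  have K2 : XiP l l (- n l - 1) * a l = 1.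
    have P := pairing c (fun y => Phi (y - 1)) (- vsum m + 1) (vsum n + 1) (XiP l)
                (fun j => - addej n l j) (fun j => m j - 1).
    rewrite /= (isum_pt (x := vsum n + 1)) in P; first last.
    - move=> y /andP[y1 y2] ny; rewrite XP1 ?mulr0 //.
      have : y != vsum n + 1 := ny; lia.
    - lia.
    have e1 : vsum n + 1 - 1 = vsum n by ring.
    have e2 : - (vsum n + 1) = - vsum n - 1 by ring.
    rewrite e1 e2 Ph1 mul1r XP2 in P.
    rewrite [RHS]P (bigD1 l) //= [X in _ = _ + X]big1 ?addr0; last first.
      move=> j nj; apply: isum0 => x; rewrite addej_neq // => /andP[x1 x2].
      rewrite (@A_shiftE _ _ c j _ _ (- vsum m) (vsum n) Phi (-1) (- x) (- x - 1)); try ring.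
      by rewrite PhA ?mulr0 //; lia.
    rewrite addej_eq (isum_pt (x := - n l - 1)); first last.
    - move=> x /andP[x1 x2] nx.
      rewrite (@A_shiftE _ _ c l _ _ (- vsum m) (vsum n) Phi (-1) (- x) (- x - 1)); try ring.
      rewrite PhA ?mulr0 //; have : x != - n l - 1 := nx; lia.
    - lia.
    rewrite (@A_shiftE _ _ c l _ _ (- vsum m) (vsum n) Phi (-1) (- (- n l - 1)) (n l)) //; ring.
  apply: (mulIf (hnz l hl)); rewrite K1.
  by rewrite mulrAC divfK ?hnz // mulrC K2.
pose G l x := Xi l (x + 1) + Phist (vsum n) * Xist l (x + 1) - \sum_(j < r) rho j * XiP j l x.
have hG : forall l, in_span (- n l) (m l - 1) (G l).
  move=> l x hx; rewrite /G.
  case/orP: hx => hx.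
    rewrite (Xis l (x + 1)) ?mulr0 ?addr0; last by apply/orP; left; lia.
    case: (eqVneq x (- n l - 1)) => ex.
      rewrite ex (bigD1 l) //= big1 ?addr0; last first.
        move=> j nj; have [XP0 _ _] := XPf j.
        by rewrite XP0 ?mulr0 // addej_neq 1?eq_sym //; apply/orP; left; lia.
      have -> : - n l - 1 + 1 = - n l by ring.
      by rewrite K subrr.
    rewrite (Xs l (x + 1)); last by apply/orP; left; move: ex; lia.
    rewrite big1 ?subrr // => j _; have [XP0 _ _] := XPf j.
    by rewrite XP0 ?mulr0 //; apply/orP; left; have := addej_le j l; move: ex; lia.
  rewrite (Xis l (x + 1)) ?mulr0 ?addr0; last by apply/orP; right; lia.
  rewrite (Xs l (x + 1)); last by apply/orP; right; lia.
  rewrite big1 ?subrr // => j _; have [XP0 _ _] := XPf j.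
  by rewrite XP0 ?mulr0 //; apply/orP; right; lia.
have HQ : forall k0, - vsum n <= k0 <= vsum m - 1 ->
    \sum_(l < r) A c l (- n l) (m l - 1) (G l) k0 = 0.
  move=> k0 hk0.
  rewrite (eq_bigr (fun l => A c l (- n l) (m l - 1) (Xi l) (k0 + 1)
      + Phist (vsum n) * A c l (- n l + 1) (m l) (Xist l) (k0 + 1)
      - \sum_(j < r) rho j * A c l (- addej n j l) (m l - 1) (XiP j l) k0)); last first.
    move=> l _.
    rewrite -(@A_win _ _ c l (- n l - 1) (m l - 1) _ _ (G l) k0 (hG l)); [|lia|lia].
    rewrite /G A_sub A_add A_scale A_sum.
    rewrite (@A_shiftE _ _ c l _ _ (- n l) (m l) (Xi l) 1 k0 (k0 + 1)); try ring.
    rewrite (@A_shiftE _ _ c l _ _ (- n l) (m l) (Xist l) 1 k0 (k0 + 1)); try ring.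
    rewrite (@A_win _ _ c l (- n l) (m l) (- n l) (m l - 1) (Xi l) (k0 + 1) (Xs l)) //; last lia.
    rewrite (@A_win _ _ c l (- n l) (m l) (- n l + 1) (m l) (Xist l) (k0 + 1) (Xis l)) //; last lia.
    congr (_ - _); apply: eq_bigr => j _; rewrite A_scale.
    have [XP0 _ _] := XPf j.
    rewrite (@A_win _ _ c l (- n l - 1) (m l - 1) (- addej n j l) (m l - 1) (XiP j l) k0 (XP0 l)) //.
    by have := addej_le j l; lia.
  rewrite sumrB big_split /= -mulr_sumr exchange_big /=.
  rewrite [X in _ - X]big1 ?subr0; last first.
    move=> j _; rewrite -mulr_sumr; have [_ XP1 _] := XPf j.
    by rewrite XP1 ?mulr0.
  case: (eqVneq (k0 + 1) (vsum m)) => ek.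
    by rewrite ek B2 Xs1 mulr1 addNr.
  by rewrite XiZ ?XsZ ?mulr0 ?addr0 //; move: ek; lia.
have := U2 hC hN hG HQ i (t - 1); rewrite /G subrK => E.
apply/eqP; rewrite -subr_eq0 -[X in _ == X]E; apply/eqP; rewrite /zmul; ring.
Qed.
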